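(* Let $n\ge 1$ and $U_n$ the family of bounded subsets of $\mathbb R^n$. (a) For every function $g:\mathbb R^n\to B_2$ whose support $\mathrm{supp}\,g=\{x:g(x)=1\}$ is locally finite, the function $\mu^g:U_n\to B_2$, $\mu^g(A)=\pi(|A\cap \mathrm{supp}\,g|)$, is a derivable measure, and $d\mu^g(x)=g(x)$ for all $x\in\mathbb R^n$. (b) Conversely, if $\mu:U_n\to B_2$ is a derivable measure, then there exists a unique function $g:\mathbb R^n\to B_2$ with locally finite support such that $\mu(A)=\pi(|A\cap\mathrm{supp}\,g|)$ for all $A\in U_n$; moreover $d\mu(x)=g(x)$ for all $x\in\mathbb R^n$.
   Context: $B_2=\{0,1\}$. $H\subset\mathbb R^n$ is locally finite if $A\cap H$ is finite for every bounded $A$. $\pi(m)=1$ if $m$ is odd, $0$ if even. $\mu$ is a measure if for every sequence of pairwise disjoint sets of $U_n$ whose union is in $U_n$, only finitely many have $\mu$-value 1 and $\mu$ of the union is their number modulo 2. $d(B)=\sup_{x,y\in B}\|x-y\|$. $\mu$ is derivable at $x$ if there exist $\varepsilon>0$, $a\in B_2$ with $\mu(B)=a$ for all $B\in U_n$ containing $x$ with $d(B)<\varepsilon$; then $d\mu(x)=a$. $\mu$ is derivable if it is derivable at every point of $\mathbb R^n$. *)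

(* Defs.v *)
From HB Require Import structures.
From mathcomp Require Import all_boot all_order all_algebra.
From mathcomp Require Import finmap.
From mathcomp Require Import all_classical all_reals.
Set Implicit Arguments. Unset Strict Implicit. Unset Printing Implicit Defensive.
Import Order.TTheory GRing.Theory Num.Theory.
Local Open Scope classical_set_scope.
Local Open Scope ring_scope.

Section Defs.
Variables (R : realType) (n : nat).
Local Notation pt := 'rV[R]_n.

Definition enorm (x : pt) : R := Num.sqrt (\sum_(i < n) x ord0 i ^+ 2).

Definition bnd (A : set pt) : Prop := exists r : R, forall x, A x -> enorm x <= r.

Definition locally_finite (H : set pt) : Prop :=
  forall A, bnd A -> finite_set (A `&` H).

Definition par (m : nat) : bool := odd m.

Definition diam (B : set pt) : R :=
  sup [set r | exists x y, B x /\ B y /\ r = enorm (x - y)].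

(* B_2-valued measure on U_n (values of mu outside U_n are irrelevant) *)
Definition is_measure (mu : set pt -> bool) : Prop :=
  forall A : nat -> set pt,
    (forall k, bnd (A k)) -> trivIset setT A -> bnd (\bigcup_k A k) ->
    exists s : seq nat, uniq s /\ (forall k, mu (A k) = true <-> k \in s) /\
      mu (\bigcup_k A k) = par (size s).

(* dmu_at mu x a : there is eps > 0 with mu(B) = a for all B in U_n
   containing x with d(B) < eps; mu is derivable at x iff such an a exists,
   and then d mu(x) = a (a is unique, taking B = {x}). *)
Definition dmu_at (mu : set pt -> bool) (x : pt) (a : bool) : Prop :=
  exists2 eps : R, 0 < eps &
    forall B, bnd B -> B x -> diam B < eps -> mu B = a.

Definition derivable_at (mu : set pt -> bool) (x : pt) : Prop :=
  exists a, dmu_at mu x a.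

Definition derivable (mu : set pt -> bool) : Prop := forall x, derivable_at mu x.

Definition supp (g : pt -> bool) : set pt := [set x | g x = true].

Definition mu_of (g : pt -> bool) (A : set pt) : bool :=
  par #|` fset_set (A `&` supp g)|.

End Defs.

(* Main.v *)
Require Import Defs.
From HB Require Import structures.
From mathcomp Require Import all_boot all_order all_algebra.
From mathcomp Require Import finmap.
From mathcomp Require Import all_classical all_reals.
From mathcomp Require Import topology normedtype.
Import Defs.
From mathcomp Require Import ring lra.
Set Implicit Arguments. Unset Strict Implicit. Unset Printing Implicit Defensive.
Import Order.TTheory GRing.Theory Num.Theory.
Local Open Scope classical_set_scope.
Import numFieldNormedType.Exports.
Local Open Scope ring_scope.

Section S.
Variables (R : realType) (n : nat).
Hypothesis hn : (1 <= n)%N.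
Local Notation pt := 'rV[R]_n.
Implicit Types (x y : pt) (A B : set pt).

Lemma coord_le_enorm (x : pt) i : `|x ord0 i| <= enorm x.
Proof.
rewrite /enorm -sqrtr_sqr ler_sqrt; last by apply: sumr_ge0 => j _; exact: sqr_ge0.
rewrite (bigD1 i) //= lerDl. apply: sumr_ge0 => j _; exact: sqr_ge0.
Qed.

Lemma enorm_ge0 x : 0 <= enorm x. Proof. exact: sqrtr_ge0. Qed.

Lemma enorm_le_coord (x : pt) (m : R) : 0 <= m ->
  (forall i, `|x ord0 i| <= m) -> enorm x <= n%:R * m.
Proof.
move=> m0 hx; rewrite /enorm -[n%:R * m]ger0_norm ?mulr_ge0 // -sqrtr_sqr ler_sqrt ?sqr_ge0 //.
apply: (@le_trans _ _ (\sum_(i < n) m ^+ 2)).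
  apply: ler_sum => i _; have := hx i; rewrite ler_norml => /andP[h1 h2]; nra.
rewrite sumr_const card_ord -mulr_natl.
have n1 : 1 <= n%:R :> R by rewrite ler1n.
have := sqr_ge0 m; nra.
Qed.

Lemma diam_le B d : 0 <= d -> (forall x y, B x -> B y -> enorm (x - y) <= d) -> diam B <= d.
Proof.
move=> d0 hB; rewrite /diam.
set E := [set r | _].
have [->|/set0P ne] := eqVneq E set0; first by rewrite sup0.
apply: ge_sup => //.
by move=> _ [u [v [Bu [Bv ->]]]]; exact: hB.
Qed.

Lemma diam_ge B x y : bnd B -> B x -> B y -> enorm (x - y) <= diam B.
Proof.
move=> [r hr] Bx By; apply: sup_upper_bound; last by exists x, y.
split; first by exists (enorm (x - y)); exists x, y.
have r0 : 0 <= r by apply: le_trans (enorm_ge0 x) (hr _ Bx).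
exists (n%:R * (r + r)) => _ [u [v [Bu [Bv ->]]]].
apply: enorm_le_coord; first by rewrite addr_ge0.
move=> i; rewrite !mxE; apply: (le_trans (ler_normB _ _)).
by apply: lerD; apply: le_trans (coord_le_enorm _ _) (hr _ _).
Qed.

Lemma bnd_sub A B : A `<=` B -> bnd B -> bnd A.
Proof. by move=> AB [r hr]; exists r => x /AB /hr. Qed.
Lemma bndU A B : bnd A -> bnd B -> bnd (A `|` B).
Proof.
move=> [r hr] [s hs]; exists (Num.max r s) => x [/hr|/hs] h; rewrite le_max h ?orbT //.
Qed.
Lemma bnd1 x : bnd [set x]. Proof. by exists (enorm x) => y ->. Qed.
Lemma bnd0 : bnd (set0 : set pt). Proof. by exists 0. Qed.

Lemma bnd_box A (m : R) : 0 <= m -> (forall x, A x -> forall i, `|x ord0 i| <= m) -> bnd A.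
Proof. move=> m0 h; exists (n%:R * m) => x /h; exact: enorm_le_coord. Qed.

Lemma not_all_in {s : seq nat} : uniq s -> ~ (forall k, k \in s).
Proof.
move=> us hall.
have : (size (iota 0 (size s).+1) <= size s)%N.
  apply: uniq_leq_size; first exact: iota_uniq. by move=> k _; exact: hall.
by rewrite size_iota ltnn.
Qed.

Lemma mu0 (mu : set pt -> bool) : is_measure mu -> mu set0 = false.
Proof.
move=> hm.
have t0 : trivIset (setT : set nat) (fun=> set0 : set pt).
  by move=> i j _ _ [x [[] _]].
have b0 : bnd (\bigcup_(k : nat) (set0 : set pt)).
  by apply: bnd_sub bnd0 => x [].
have [s [us [hs _]]] := hm (fun=> set0) (fun=> bnd0) t0 b0.
apply/negbTE/negP => h; have := not_all_in us; apply => k. exact/hs.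
Qed.


Lemma size_of_mem (s t : seq nat) (P : nat -> bool) : uniq s -> uniq t ->
  (forall k, (k \in s) = P k) -> (forall k, (k \in t) = P k) -> size s = size t.
Proof.
move=> us ut hs ht; apply: perm_size; apply: uniq_perm => // k.
by rewrite hs ht.
Qed.

Lemma mu_add2 (mu : set pt -> bool) A B : is_measure mu -> bnd A -> bnd B ->
  A `&` B = set0 -> mu (A `|` B) = mu A (+) mu B.
Proof.
move=> hm bA bB AB.
have ABx : forall x, A x -> B x -> False.
  by move=> x a b; have : (A `&` B) x by []; rewrite AB.
pose F k := if k == 0%N then A else if k == 1%N then B else set0.
have hF : forall k, bnd (F k).
  by move=> [|[|k]]; rewrite /F /=; [exact: bA|exact: bB|exact: bnd0].
have tF : trivIset setT F.
  move=> i j _ _ [x [Fi Fj]]; move: Fi Fj; rewrite /F.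
  case: i => [|[|i]] /=; case: j => [|[|j]] //= Fi Fj;
    first [by case: (ABx _ Fi Fj) | by case: (ABx _ Fj Fi)| by case: Fi | by case: Fj].
have UF : \bigcup_k F k = A `|` B.
  apply/seteqP; split => x.
  - by case=> -[|[|k]] _; rewrite /F /= => h; [left|right|case: h].
  - by case=> h; [exists 0%N|exists 1%N].
have bU : bnd (\bigcup_k F k) by rewrite UF; exact: bndU.
have [s [us [hs hU]]] := hm F hF tF bU.
rewrite UF in hU; rewrite hU /par.
have e : forall k, (k \in s) = mu (F k).
  by move=> k; apply/idP/idP => h; apply/hs.
have eF : forall k, mu (F k) = [|| (k == 0%N) && mu A | (k == 1%N) && mu B].
  move=> [|[|k]]; rewrite /F /=; [by rewrite orbF | by [] | exact: mu0 hm].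
case hA : (mu A); case hB : (mu B).
- rewrite (@size_of_mem s [:: 0%N; 1%N] (fun k => mu (F k))) //.
  by move=> k; rewrite eF hA hB !inE !andbT.
- rewrite (@size_of_mem s [:: 0%N] (fun k => mu (F k))) //.
  by move=> k; rewrite eF hA hB !inE !andbT andbF orbF.
- rewrite (@size_of_mem s [:: 1%N] (fun k => mu (F k))) //.
  by move=> k; rewrite eF hA hB !inE !andbT andbF.
- rewrite (@size_of_mem s [::] (fun k => mu (F k))) //.
  by move=> k; rewrite eF hA hB !andbF.
Qed.

Lemma card_disj (X Y : set pt) : finite_set X -> finite_set Y -> X `&` Y = set0 ->
  #|` fset_set (X `|` Y)| = (#|` fset_set X| + #|` fset_set Y|)%N.
Proof.
move=> fX fY XY; rewrite fset_setU // -cardfsUI -fset_setI ?XY ?fset_set0 ?cardfs0 ?addn0 //.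
Qed.

Lemma odd_sum (l : seq nat) (c : nat -> nat) :
  odd (\sum_(k <- l) c k)%N = odd (count (fun k => odd (c k)) l).
Proof. by elim: l => [|a l IH]; rewrite ?big_nil // big_cons /= !oddD IH oddb. Qed.

Lemma mu_of_measure (g : pt -> bool) : locally_finite (supp g) -> is_measure (mu_of g).
Proof.
move=> lf A bA tA bU.
set S := supp g; set U := \bigcup_k A k.
have fF : finite_set (U `&` S) := lf _ bU.
have fA k : finite_set (A k `&` S) := lf _ (bA k).
have gen : forall l : seq pt, (forall y, y \in l -> U y) ->
    exists N, forall y, y \in l -> exists2 k, (k < N)%N & A k y.
  elim => [|a l IH] h; first by exists 0%N.
  have [N hN] : exists N, forall y, y \in l -> exists2 k, (k < N)%N & A k y.
    by apply: IH => y yl; apply: h; rewrite inE yl orbT.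
  have [k _ Ak] := h a (mem_head a l).
  exists (maxn N k.+1) => y; rewrite inE => /orP[/eqP->|yl].
    by exists k => //; rewrite leq_max leqnn orbT.
  by have [k' kN Ak'] := hN y yl; exists k' => //; rewrite leq_max kN.
have [N hN] : exists N, forall y, (U `&` S) y -> exists2 k, (k < N)%N & A k y.
  have [|N hN] := gen (fset_set (U `&` S)).
    by move=> y; rewrite in_fset_set // => /set_mem [].
  by exists N => y hy; apply: hN; rewrite in_fset_set // mem_set.
have hN' : forall k, (N <= k)%N -> A k `&` S = set0.
  move=> k Nk; apply/seteqP; split => y // [Aky Sy].
  have [k' k'N Ak'y] : exists2 k', (k' < N)%N & A k' y.
    by apply: hN; split => //; exists k.
  have ekk : k = k' by apply: tA => //; exists y.
  by move: Nk; rewrite ekk leqNgt k'N.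
set c := fun k => #|` fset_set (A k `&` S)|.
have hcard : forall M, #|` fset_set ([set y | exists2 k, (k < M)%N & A k y] `&` S)| =
    (\sum_(0 <= k < M) c k)%N.
  elim => [|M IH].
    rewrite big_geq // (_ : _ `&` _ = set0) ?fset_set0 ?cardfs0 //.
    by apply/seteqP; split => y // [[]].
  rewrite big_nat_recr //= -IH /c -card_disj //.
  - congr (#|` fset_set _|); apply/seteqP; split => y.
      move=> [[k kM Aky] Sy]; rewrite ltnS leq_eqVlt in kM.
      case/orP: kM => [/eqP ek|kM]; [right; rewrite -ek | left] => //.
      by split => //; exists k.
    case=> [[[k kM Aky] Sy]|[Ay Sy]]; split => //.
      by exists k => //; rewrite ltnS ltnW.
    by exists M.
  - by apply: sub_finite_set fF => y [[k _ Aky] Sy]; split => //; exists k.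
  - apply/seteqP; split => y // [[[k kM Aky] Sy] [AMy _]].
    have ekk : k = M by apply: tA => //; exists y.
    by move: kM; rewrite ekk ltnn.
have eUS : [set y | exists2 k, (k < N)%N & A k y] `&` S = U `&` S.
  apply/seteqP; split => y.
    by move=> [[k _ Aky] Sy]; split => //; exists k.
  by move=> h; split; [exact: hN | case: h].
exists [seq k <- index_iota 0 N | mu_of g (A k)].
split; first by rewrite filter_uniq // /index_iota iota_uniq.
split.
  move=> k; rewrite mem_filter mem_index_iota /=.
  split => [h|/andP[//]]; rewrite h.
  case: (ltnP k N) => // Nk; move: h.
  by rewrite /mu_of -/S hN' // fset_set0 cardfs0.
rewrite size_filter /mu_of -/S -eUS hcard /par odd_sum.
done.
Qed.

Lemma enorm_gt0 x y : y != x -> 0 < enorm (y - x).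
Proof.
move=> yx; rewrite lt_neqAle enorm_ge0 andbT; apply: contra yx => /eqP e0.
apply/eqP/rowP => i; have := coord_le_enorm (y - x) i.
by rewrite -e0 !mxE normr_le0 subr_eq0 => /eqP.
Qed.

Lemma eps_list x (l : seq pt) : exists2 e : R, 0 < e &
  forall y, y \in l -> y != x -> e <= enorm (y - x).
Proof.
elim: l => [|a l [e e0 he]]; first by exists 1.
exists (Num.min e (if a == x then 1 else enorm (a - x))).
  by rewrite lt_min e0 /=; case: eqP => // /eqP ax; exact: enorm_gt0.
move=> y; rewrite inE => /orP[/eqP->|yl] yx.
  by rewrite ge_min (negbTE yx) lexx orbT.
by rewrite ge_min he.
Qed.

Lemma mu_of_dmu (g : pt -> bool) : locally_finite (supp g) ->
  forall x, dmu_at (mu_of g) x (g x).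
Proof.
move=> lf x.
set Q := [set y : pt | forall i, `|y ord0 i - x ord0 i| <= 1].
have bQ : bnd Q.
  apply: (@bnd_box _ (1 + enorm x)); first by rewrite addr_ge0 // enorm_ge0.
  move=> y Qy i; rewrite -(subrK (x ord0 i) (y ord0 i)).
  apply: le_trans (ler_normD _ _) _; apply: lerD; first exact: Qy.
  exact: coord_le_enorm.
have fQ := lf _ bQ.
have [e0 e0p he0] := eps_list x (fset_set (Q `&` supp g)).
exists (Num.min e0 1); first by rewrite lt_min e0p ltr01.
move=> B bB Bx dB.
have hB : forall y, B y -> enorm (y - x) < Num.min e0 1.
  by move=> y By; apply: le_lt_trans (diam_ge bB By Bx) dB.
have BS : B `&` supp g = if g x then [set x] else set0.
  apply/seteqP; split => y.
    move=> [By Sy]; have := hB y By; rewrite lt_min => /andP[h1 h2].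
    case: (eqVneq y x) => [eyx|yx].
      by move: Sy; rewrite /supp /= eyx => ->.
    have Qy : Q y.
      move=> i; apply: le_trans (ltW h2).
      by have := coord_le_enorm (y - x) i; rewrite !mxE.
    have : e0 <= enorm (y - x).
      by apply: he0 yx; rewrite in_fset_set // mem_set.
    by rewrite leNgt h1.
  by case hg : (g x) => // ->; split.
rewrite /mu_of BS; case: (g x); rewrite ?fset_set1 ?fset_set0 ?cardfs1 ?cardfs0 //.
Qed.

Lemma enorm0 : enorm (0 : pt) = 0.
Proof.
apply/eqP; rewrite eq_le enorm_ge0 andbT.
have := @enorm_le_coord 0 0 (lexx 0); rewrite mulr0; apply => i.
by rewrite mxE normr0.
Qed.

Lemma dmu_singleton (mu : set pt -> bool) x a : dmu_at mu x a -> a = mu [set x].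
Proof.
move=> [e e0 he]; symmetry; apply: he => //; first exact: bnd1.
apply: le_lt_trans e0; apply: diam_le => // u v -> ->.
by rewrite subrr enorm0.
Qed.

Definition near_ (r : R) (c y : pt) := forall i, `|y ord0 i - c ord0 i| < r.



Lemma near_bnd r c (Q : set pt) : 0 <= r -> (forall y, Q y -> near_ r c y) -> bnd Q.
Proof.
move=> r0 hQ; apply: (@bnd_box _ (r + enorm c)); first by rewrite addr_ge0 // enorm_ge0.
move=> y Qy i; rewrite -(subrK (c ord0 i) (y ord0 i)).
apply: le_trans (ler_normD _ _) _; apply: lerD; first exact/ltW/hQ.
exact: coord_le_enorm.
Qed.

Lemma partb (mu : set pt -> bool) : is_measure mu -> derivable mu ->
  let g := fun x => mu [set x] in
  locally_finite (supp g) /\ (forall A, bnd A -> mu A = mu_of g A) /\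
  (forall x, dmu_at mu x (g x)).
Proof.
move=> hm hd g.
have hdg : forall x, dmu_at mu x (g x).
  by move=> x; have [a ha] := hd x; rewrite /g -(dmu_singleton ha).
have lf : locally_finite (supp g).
  move=> A bA; apply: contrapT => inf.
  have /infiniteP/pcard_leP/injfunPex [f fA finj] := inf.
  have hb : forall k, bnd [set f k] by move=> k; exact: bnd1.
  have ht : trivIset setT (fun k => [set f k]).
    move=> i j _ _ [x [/= -> e]]; apply: finj => //; by rewrite inE.
  have hU : bnd (\bigcup_k [set f k]).
    apply: bnd_sub bA => x [k _ ->]; by case: (fA k I).
  have [s [us [hs _]]] := hm _ hb ht hU.
  apply: (not_all_in us) => k; apply/hs.
  by case: (fA k I).
have mg := mu_of_measure lf.
split => //; split => //.
have : forall x, exists ee : R, 0 < ee /\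
    forall B, bnd B -> B x -> diam B < ee -> mu B = g x.
  by move=> x; have [ee ee0 hee] := hdg x; exists ee.
move=> /choice [e he].
pose r x := e x / (2 * n%:R + 2).
have den0 : 0 < 2 * n%:R + 2 :> R by rewrite ltr_wpDl // mulr_ge0.
have rpos x : 0 < r x by rewrite divr_gt0 //; case: (he x).
have rn x : n%:R * (r x + r x) < e x.
  have er : e x = r x * (2 * n%:R + 2) by rewrite /r divfK // gt_eqF.
  have := rpos x; rewrite er; nra.
have L1 : forall c Q, (forall y, Q y -> near_ (r c) c y) -> Q c -> mu Q = g c.
  move=> c Q hQ Qc; have [_ hec] := he c.
  apply: hec => //; first exact: (near_bnd (ltW (rpos c)) hQ).
  apply: le_lt_trans (rn c); apply: diam_le.
    by rewrite mulr_ge0 // addr_ge0 // ltW.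
  move=> y z Qy Qz; apply: enorm_le_coord; first by rewrite addr_ge0 // ltW.
  move=> i; rewrite !mxE.
  rewrite (_ : y ord0 i - z ord0 i = (y ord0 i - c ord0 i) - (z ord0 i - c ord0 i)); last by ring.
  apply: le_trans (ler_normB _ _) _.
  by apply: lerD; apply: ltW; [exact: hQ | exact: hQ].
have nearcc : forall c, near_ (r c) c c by move=> c i; rewrite subrr normr0.
have L2 : forall c y, near_ (r c) c y -> y != c -> g y = false.
  move=> c y ncy yc.
  have d : [set c] `&` [set y] = set0.
    by apply/seteqP; split => z // [/= -> ezy]; move: yc; rewrite ezy eqxx.
  have h1 : mu ([set c] `|` [set y]) = g c.
    by apply: L1 => [z [->|->]|]; [exact: nearcc | exact: ncy | left].
  move: h1; rewrite (mu_add2 hm (bnd1 c) (bnd1 y) d) -/(g c) -/(g y).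
  by case: (g c); case: (g y).

have L3 : forall c P, (forall y, P y -> near_ (r c) c y) -> mu P = mu_of g P.
  move=> c P hP.
  have PS : forall y, P y -> supp g y -> y = c.
    move=> y Py Sy; case: (eqVneq y c) => // yc.
    by move: Sy; rewrite /supp /= (L2 c y (hP y Py) yc).
  have bP := near_bnd (ltW (rpos c)) hP.
  case: (pselect (P c)) => Pc.
    rewrite (L1 c P hP Pc) /mu_of.
    have -> : P `&` supp g = if g c then [set c] else set0.
      apply/seteqP; split => y.
        move=> [Py Sy]; have ey := PS y Py Sy; move: Sy.
        by rewrite ey /supp /= => ->.
      by case hg: (g c) => // -> ; split.
    by case: (g c); rewrite ?fset_set1 ?fset_set0 ?cardfs1 ?cardfs0.
  have h1 : mu (P `|` [set c]) = g c.
    apply: L1; last by right.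
    by move=> y [/hP //|->]; exact: nearcc.
  have d : P `&` [set c] = set0.
    by apply/seteqP; split => y // [Py /= ey]; apply: Pc; rewrite -ey.
  move: h1; rewrite (mu_add2 hm bP (bnd1 c) d) -/(g c) => h1.
  have -> : mu P = false by move: h1; case: (mu P); case: (g c).
  rewrite /mu_of.
  have -> : P `&` supp g = set0.
    by apply/seteqP; split => y // [Py Sy]; apply: Pc; rewrite -(PS y Py Sy).
  by rewrite fset_set0 cardfs0.
have L4 : forall l : seq pt, forall A, bnd A ->
    (forall y, A y -> exists2 c, c \in l & near_ (r c) c y) -> mu A = mu_of g A.
  elim => [|a l IH] A bA hA.
    have -> : A = set0 by apply/seteqP; split => y // /hA [c].
    by rewrite (mu0 hm) (mu0 mg).
  set N := [set y | near_ (r a) a y].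
  rewrite -(setUIDK A N).
  have d : (A `&` N) `&` (A `\` N) = set0.
    by apply/seteqP; split => y // [[_ Ny] [_ nNy]].
  have b1 : bnd (A `&` N) by apply: bnd_sub bA => y [].
  have b2 : bnd (A `\` N) by apply: bnd_sub bA => y [].
  rewrite (mu_add2 hm b1 b2 d) (mu_add2 mg b1 b2 d).
  congr (_ (+) _).
    by apply: L3 => y [_ Ny]; exact: Ny.
  apply: IH => // y [Ay nNy]; have [c] := hA y Ay.
  by rewrite inE => /orP[/eqP ->|cl] ncy; [case: nNy | exists c].
move=> A [M hM].
set K := [set v : pt | forall i, v ord0 i \in `[-M, M]].
have cK : compact K.
  by apply: (@rV_compact _ _ (fun=> `[-M, M]%classic)) => _; exact: segment_compact.
have AK : A `<=` K.
  move=> y Ay i; rewrite in_itv /= -ler_norml.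
  exact: le_trans (coord_le_enorm y i) (hM y Ay).
rewrite compact_cover in cK.
have [|D' _ hD'] := cK pt K (fun c => ball c (r c)) (fun c _ => ball_open c (r c)).
  by move=> v Kv; exists v => //; exact: ballxx (rpos v).
apply: (L4 D'); first by exists M.
move=> y Ay; have [c Dc bc] := hD' y (AK y Ay).
exists c => //.
move=> i; case: bc => _ /(_ ord0 i); rewrite /ball /= distrC //.
Qed.


End S.

Theorem theorem5p17 (R : realType) (n : nat) (hn : (1 <= n)%N) :
  (forall g : 'rV[R]_n -> bool, locally_finite (supp g) ->
     is_measure (mu_of g) /\ derivable (mu_of g) /\
     (forall x, dmu_at (mu_of g) x (g x)))
  /\
  (forall mu : set 'rV[R]_n -> bool, is_measure mu -> derivable mu ->
     exists g : 'rV[R]_n -> bool,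
       (locally_finite (supp g) /\ (forall A, bnd A -> mu A = mu_of g A)) /\
       (forall g' : 'rV[R]_n -> bool,
          locally_finite (supp g') /\ (forall A, bnd A -> mu A = mu_of g' A) ->
          g' = g) /\
       (forall x, dmu_at mu x (g x))).
Proof.
split.
  move=> g lf; split; first exact: mu_of_measure.
  split; last exact: mu_of_dmu.
  by move=> x; exists (g x); exact: mu_of_dmu.
move=> mu hm hd.
have [lf [hA hdg]] := partb hn hm hd.
exists (fun x => mu [set x]); split; first by split.
split => //.
move=> g' [lf' hA']; apply/funext => x.
rewrite (hA' [set x] (bnd1 x)) /mu_of.
case hg : (g' x).
  rewrite (_ : [set x] `&` supp g' = [set x]) ?fset_set1 ?cardfs1 //.
  by apply/seteqP; split => y; [case | move=> /= ->; split].
rewrite (_ : [set x] `&` supp g' = set0) ?fset_set0 ?cardfs0 //.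
by apply/seteqP; split => y // [/= -> ]; rewrite /supp /= hg.
Qed.
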